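(* Let $0<b<1$, $0<c<1$, and let $(\epsilon_n)_{n\geq1}$ satisfy $0<\epsilon_n<n$, $\epsilon_{n+1}\geq\epsilon_n+\frac{1}{2^{n/2}\ln 2}$ for all $n$, and $\epsilon_n/n\to0$. Put $t_n=2^{1-\epsilon_n/n}$, $a_n=c^{t_n^n}$ and $F_n(z,w)=(z^2+a_nw,\ a_nz)$. Let $\Omega=\{(z,w)\in\mathbb{C}^2:F_n\circ\cdots\circ F_1(z,w)\to0\}$, let $K\subseteq\Omega$ be compact, and set $\delta_n=\max\{|z_n|,|w_n|:(z,w)\in K\}$ where $(z_n,w_n)=F_n\circ\cdots\circ F_1(z,w)$. Suppose that for arbitrarily large $n$ there is an integer $k(n)\geq1$ with $t_{n+k(n)+1}\leq 2^{\frac{k(n)}{n+k(n)+1}}$. Then there exist arbitrarily large $n$ such that $\delta_{n+k}\leq a_{n+k+1}b^k$ for all $k\geq0$. *)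

(* Defs.v *)
From Stdlib Require Import Reals List.
From Coquelicot Require Import Coquelicot.
Open Scope R_scope.

Definition tseq (eps : nat -> R) (n : nat) : R := Rpower 2 (1 - eps n / INR n).

Definition aseq (c : R) (eps : nat -> R) (n : nat) : R :=
  Rpower c ((tseq eps n) ^ n).

Definition Fmap (c : R) (eps : nat -> R) (n : nat) (p : C * C) : C * C :=
  (Cplus (Cmult (fst p) (fst p)) (Cmult (RtoC (aseq c eps n)) (snd p)),
   Cmult (RtoC (aseq c eps n)) (fst p)).

Fixpoint orbit (c : R) (eps : nat -> R) (n : nat) (p : C * C) : C * C :=
  match n with
  | O => p
  | S m => Fmap c eps (S m) (orbit c eps m p)
  end.

Definition norm2 (p : C * C) : R := Rmax (Cmod (fst p)) (Cmod (snd p)).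

Definition Omega (c : R) (eps : nat -> R) (p : C * C) : Prop :=
  is_lim_seq (fun n => norm2 (orbit c eps n p)) 0.

Definition compact2 (K : C * C -> Prop) : Prop :=
  forall (I : Type) (U : I -> C * C -> Prop),
    (forall i, open (U i)) ->
    (forall x, K x -> exists i, U i x) ->
    exists l : list I, forall x, K x -> exists i, In i l /\ U i x.

Definition is_delta (c : R) (eps : nat -> R) (K : C * C -> Prop) (n : nat) (d : R) : Prop :=
  (exists p, K p /\ d = norm2 (orbit c eps n p)) /\
  (forall p, K p -> norm2 (orbit c eps n p) <= d).

(* Main.v *)
Require Import Defs.
From Stdlib Require Import Reals List Lra Lia.
From Coquelicot Require Import Coquelicot.
Open Scope R_scope.
Lemma conv1 {T} (F : (T -> Prop) -> Prop) (FF : Filter F) (f : T -> C) (y : C) :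
  filterlim f F (@locally (AbsRing_UniformSpace C_AbsRing) y) -> filterlim f F (@locally C_UniformSpace y).
Proof.
  intros H. apply filterlim_locally. intros e.
  pose proof (proj1 (@filterlim_locally T (AbsRing_UniformSpace C_AbsRing) F FF f y) H e) as H'.
  eapply filter_imp; [|exact H']. intros x Hx.
  unfold ball in Hx |- *. simpl in Hx |- *. unfold prod_ball, AbsRing_ball in Hx |- *. simpl in *.
  change (Cmod (Cminus (f x) y) < e) in Hx.
  pose proof (Rmax_Cmod (Cminus (f x) y)) as HM.
  destruct (f x) as [a1 a2], y as [b1 b2]. simpl in *.
  change (Rabs (a1 - b1) < e /\ Rabs (a2 - b2) < e).
  split; eapply Rle_lt_trans; [| exact Hx | | exact Hx]; eapply Rle_trans; [| exact HM | | exact HM];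
  [apply Rmax_l | apply Rmax_r].
Qed.
Lemma conv2 {T} (F : (T -> Prop) -> Prop) (FF : Filter F) (f : T -> C) (y : C) :
  filterlim f F (@locally C_UniformSpace y) -> filterlim f F (@locally (AbsRing_UniformSpace C_AbsRing) y).
Proof.
  intros H. apply (proj2 (@filterlim_locally T (AbsRing_UniformSpace C_AbsRing) F FF f y)). intros e.
  assert (He : 0 < e / 2) by (destruct e; simpl; lra).
  pose proof (proj1 (@filterlim_locally T C_UniformSpace F FF f y) H (mkposreal _ He)) as H'.
  eapply filter_imp; [|exact H']. intros x Hx.
  unfold ball in Hx |- *. simpl in Hx |- *. unfold prod_ball, AbsRing_ball in Hx |- *. simpl in *.
  change (Cmod (Cminus (f x) y) < e).
  pose proof (Cmod_2Rmax (Cminus (f x) y)) as HM.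
  destruct (f x) as [a1 a2], y as [b1 b2]. simpl in *.
  change (Rabs (a1 - b1) < e/2 /\ Rabs (a2 - b2) < e/2) in Hx.
  destruct Hx as [X1 X2]. simpl in X1, X2. change (a1 + - b1) with (a1 - b1) in HM; change (a2 + - b2) with (a2 - b2) in HM.
  assert (Rmax (Rabs (a1 - b1)) (Rabs (a2 - b2)) < e/2) by (apply Rmax_lub_lt; lra).
  assert (sqrt 2 < 2).
  { apply Rlt_le_trans with (sqrt 4); [apply sqrt_lt_1; lra|]. replace 4 with (2*2) by ring. rewrite sqrt_square; lra. }
  assert (0 <= Rmax (Rabs (a1 - b1)) (Rabs (a2 - b2))).
  { eapply Rle_trans; [apply Rabs_pos | apply Rmax_l]. }
  simpl in HM. 
  assert (sqrt 2 * Rmax (Rabs (a1 - b1)) (Rabs (a2 - b2)) <= 2 * Rmax (Rabs (a1 - b1)) (Rabs (a2 - b2))) by (apply Rmult_le_compat_r; lra).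
  eapply Rle_lt_trans; [exact HM|]. lra.
Qed.

Lemma contC_mult {U : UniformSpace} (f g : U -> C) (x : U) :
  continuous f x -> continuous g x -> continuous (fun y => Cmult (f y) (g y)) x.
Proof.
  intros Hf Hg. apply conv1; [apply locally_filter|].
  apply (@continuous_mult U C_AbsRing f g x).
  - apply conv2; [apply locally_filter|exact Hf].
  - apply conv2; [apply locally_filter|exact Hg].
Qed.

Lemma contC_plus {U : UniformSpace} (f g : U -> C) (x : U) :
  continuous f x -> continuous g x -> continuous (fun y => Cplus (f y) (g y)) x.
Proof.
  intros Hf Hg. apply (@continuous_plus U C_AbsRing C_NormedModule f g x); assumption.
Qed.

Lemma orbit_cont (c : R) (eps : nat -> R) (m : nat) (q : C * C) :
  continuous (fun p : C * C => fst (orbit c eps m p)) q /\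
  continuous (fun p : C * C => snd (orbit c eps m p)) q.
Proof.
  induction m as [|m [H1 H2]]; simpl.
  - destruct q as [x y]. split; [apply continuous_fst | apply continuous_snd].
  - split.
    + apply contC_plus; apply contC_mult; auto; apply continuous_const.
    + apply contC_mult; [apply continuous_const | exact H1].
Qed.

Lemma open_U (c : R) (eps : nat -> R) (m : nat) (r : R) :
  open (fun p : C * C => norm2 (orbit c eps m p) < r).
Proof.
  apply (open_ext (fun p => Cmod (fst (orbit c eps m p))  < r /\ Cmod (snd (orbit c eps m p)) < r)).
  { intros p; unfold norm2; split.
    - intros [A B]; now apply Rmax_lub_lt.
    - intros H; split; eapply Rle_lt_trans; [apply Rmax_l | exact H | apply Rmax_r | exact H]. }
  apply open_and.
  - apply (open_comp (fun p => Cmod (fst (orbit c eps m p))) (fun u => u < r)); [|apply open_lt].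
    intros x _. apply (continuous_comp (fun p => fst (orbit c eps m p)) Cmod).
    + apply orbit_cont.
    + apply (@filterlim_norm C_AbsRing C_NormedModule).
  - apply (open_comp (fun p => Cmod (snd (orbit c eps m p))) (fun u => u < r)); [|apply open_lt].
    intros x _. apply (continuous_comp (fun p => snd (orbit c eps m p)) Cmod).
    + apply orbit_cont.
    + apply (@filterlim_norm C_AbsRing C_NormedModule).
Qed.


Lemma archi (Q : R) : exists M : nat, Q <= INR M.
Proof.
  destruct (Rle_lt_dec Q 0) as [H|H].
  - exists O. simpl. lra.
  - destruct (nfloor_ex Q (Rlt_le _ _ H)) as [n [_ Hn]].
    exists (S n). rewrite S_INR. lra.
Qed.

Lemma exp_le (x y : R) : x <= y -> exp x <= exp y.
Proof. intros [H|H]; [left; now apply exp_increasing | right; now subst]. Qed.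

Lemma exp_le_inv (x y : R) : exp x <= exp y -> x <= y.
Proof.
  intros H. destruct (Rle_lt_dec x y) as [|H2]; auto.
  apply exp_increasing in H2. lra.
Qed.

Lemma ln2_pos : 0 < ln 2.
Proof. rewrite <- ln_1. apply ln_increasing; lra. Qed.

Lemma R2_ge1 (y : R) : 0 <= y -> 1 + y * ln 2 <= Rpower 2 y.
Proof. intros. unfold Rpower. apply exp_ineq1_le. Qed.

Lemma R2_pos (y : R) : 0 < Rpower 2 y.
Proof. unfold Rpower. apply exp_pos. Qed.

Lemma R2_mono (x y : R) : x <= y -> Rpower 2 x <= Rpower 2 y.
Proof.
  intros H. unfold Rpower. apply exp_le. pose proof ln2_pos. nra.
Qed.

Lemma tpow (eps : nat -> R) (m : nat) : (1 <= m)%nat ->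
  tseq eps m ^ m = Rpower 2 (INR m - eps m).
Proof.
  intros Hm. unfold tseq.
  rewrite <- Rpower_pow by apply R2_pos.
  rewrite Rpower_mult. f_equal.
  assert (0 < INR m) by (apply lt_0_INR; lia). field. lra.
Qed.

Lemma A_eq (c : R) (eps : nat -> R) (m : nat) : (1 <= m)%nat ->
  aseq c eps m = exp (Rpower 2 (INR m - eps m) * ln c).
Proof. intros Hm. unfold aseq. rewrite tpow by exact Hm. reflexivity. Qed.

Lemma A_pos (c : R) (eps : nat -> R) (m : nat) : 0 < aseq c eps m.
Proof. unfold aseq, Rpower. apply exp_pos. Qed.

Lemma A_le_c (c : R) (eps : nat -> R) (m : nat) : 0 < c < 1 -> (1 <= m)%nat ->
  eps m < INR m -> aseq c eps m <= c.
Proof.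
  intros Hc Hm He. rewrite A_eq by exact Hm.
  assert (Hlc : ln c < 0) by (rewrite <- ln_1; apply ln_increasing; lra).
  pose proof (R2_ge1 (INR m - eps m)) as H1.
  pose proof ln2_pos.
  assert (1 <= Rpower 2 (INR m - eps m)) by (assert (0 <= (INR m - eps m) * ln 2) by nra; lra).
  rewrite <- (exp_ln c) at 2 by lra. apply exp_le. nra.
Qed.

Lemma A_lower (c : R) (eps : nat -> R) (m k : nat) : 0 < c < 1 -> (1 <= m)%nat ->
  INR m - eps m <= INR k -> exp (2 ^ k * ln c) <= aseq c eps m.
Proof.
  intros Hc Hm He. rewrite A_eq by exact Hm.
  assert (Hlc : ln c < 0) by (rewrite <- ln_1; apply ln_increasing; lra).
  apply exp_le. rewrite <- Rpower_pow by lra.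
  pose proof (R2_mono _ _ He). nra.
Qed.

Lemma tseq_hyp (eps : nat -> R) (m k : nat) : (1 <= m)%nat ->
  tseq eps m <= Rpower 2 (INR k / INR m) -> INR m - eps m <= INR k.
Proof.
  intros Hm H. unfold tseq, Rpower in H. apply exp_le_inv in H.
  pose proof ln2_pos.
  assert (0 < INR m) by (apply lt_0_INR; lia).
  assert (1 - eps m / INR m <= INR k / INR m).
  { apply Rmult_le_reg_r with (ln 2); auto. }
  apply Rmult_le_compat_r with (r := INR m) in H2; [|lra].
  replace ((1 - eps m / INR m) * INR m) with (INR m - eps m) in H2 by (field; lra).
  replace (INR k / INR m * INR m) with (INR k) in H2 by (field; lra). exact H2.
Qed.

Lemma key (b c : R) (eps : nat -> R) : 0 < b < 1 -> 0 < c < 1 ->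
  (forall n : nat, (1 <= n)%nat ->
     eps (S n) >= eps n + 1 / (Rpower 2 (INR n / 2) * ln 2)) ->
  is_lim_seq (fun n => eps n / INR n) 0 ->
  exists M : nat, forall m, (M <= m)%nat ->
    2 * aseq c eps (S m) ^ 2 <= b * aseq c eps (S (S m)).
Proof.
  intros Hb Hc Hstep Hlim.
  apply is_lim_seq_spec in Hlim.
  assert (Hq : 0 < /4) by lra.
  destruct (Hlim (mkposreal _ Hq)) as [N0 HN0]. simpl in HN0.
  assert (Hlc : ln c < 0) by (rewrite <- ln_1; apply ln_increasing; lra).
  assert (Hlb : ln b < 0) by (rewrite <- ln_1; apply ln_increasing; lra).
  pose proof ln2_pos as Hl2.
  destruct (archi (4 * (ln 2 - ln b) / ((- ln c) * ln 2))) as [M1 HM1].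
  exists (Nat.max N0 M1). intros m Hm.
  set (n1 := S m).
  assert (Hn1 : (1 <= n1)%nat) by (unfold n1; lia).
  assert (Hx1 : INR M1 <= INR n1) by (apply le_INR; unfold n1; lia).
  set (x1 := INR n1) in *.
  assert (Hx1p : 0 < x1) by (apply lt_0_INR; lia).
  assert (He1 : eps n1 <= x1 / 4).
  { specialize (HN0 n1 ltac:(unfold n1; lia)). fold x1 in HN0.
    rewrite Rminus_0_r in HN0. apply Rabs_lt_between in HN0.
    destruct HN0 as [_ HN0].
    apply Rmult_lt_compat_r with (r := x1) in HN0; [|lra].
    replace (eps n1 / x1 * x1) with (eps n1) in HN0 by (field; lra). lra. }
  specialize (Hstep n1 Hn1). fold x1 in Hstep.
  rewrite (A_eq c eps n1 Hn1), (A_eq c eps (S n1) ltac:(lia)).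
  rewrite S_INR. fold x1.
  set (e1 := eps n1) in *. set (e2 := eps (S n1)) in *.
  set (X := Rpower 2 (x1 / 2)).
  assert (HX : 1 <= X).
  { pose proof (R2_ge1 (x1/2)). unfold X. assert (0 <= x1/2*ln 2) by nra. lra. }
  set (d := e2 - e1).
  assert (Hd : 1 / (X * ln 2) <= d) by (unfold d, X; lra).
  set (B := Rpower 2 (x1 + 1 - e1)).
  assert (HP1 : 2 * Rpower 2 (x1 - e1) = B).
  { unfold B. replace (x1 + 1 - e1) with (1 + (x1 - e1)) by ring.
    rewrite Rpower_plus, Rpower_1 by lra. reflexivity. }
  assert (HP2 : Rpower 2 (x1 + 1 - e2) = B * Rpower 2 (- d)).
  { unfold B, d. rewrite <- Rpower_plus. f_equal. ring. }
  assert (HXp : 0 < X) by lra.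
  assert (Hdpos : 0 < 1 / (X * ln 2)).
  { apply Rdiv_lt_0_compat; [lra| nra]. }
  assert (Hrd : Rpower 2 (- d) <= / (1 + / X)).
  { unfold Rpower.
    apply Rle_trans with (exp (- (/ X))).
    - apply exp_le.
      assert (d * ln 2 >= / X).
      { apply Rle_ge. apply Rmult_le_compat_r with (r := ln 2) in Hd; [|lra].
        replace (1 / (X * ln 2) * ln 2) with (/ X) in Hd by (field; lra). exact Hd. }
      lra.
    - rewrite exp_Ropp. apply Rinv_le_contravar.
      + assert (0 < / X) by (apply Rinv_0_lt_compat; lra). lra.
      + apply exp_ineq1_le. }
  assert (HiX : 0 < / X <= 1).
  { split; [apply Rinv_0_lt_compat; lra|]. rewrite <- Rinv_1. apply Rinv_le_contravar; lra. }
  assert (Hfrac : / (1 + / X) <= 1 - / X / 2).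
  { apply Rmult_le_reg_r with (1 + / X); [lra|].
    rewrite Rinv_l by lra. nra. }
  assert (HBpos : 0 < B) by (unfold B; apply R2_pos).
  assert (Hdiff : B * (/ X / 2) <= B - Rpower 2 (x1 + 1 - e2)).
  { rewrite HP2. nra. }
  assert (HBX : B * (/ X / 2) = Rpower 2 (x1 / 2 - e1)).
  { unfold B, X.
    replace (x1 + 1 - e1) with ((x1/2 - e1) + (1 + x1/2)) by field.
    rewrite Rpower_plus, Rpower_plus, Rpower_1 by lra.
    pose proof (R2_pos (x1/2)). field. lra. }
  assert (Hgrow : 1 + x1 / 4 * ln 2 <= Rpower 2 (x1 / 2 - e1)).
  { apply Rle_trans with (Rpower 2 (x1/4)).
    - apply R2_ge1. lra.
    - apply R2_mono. lra. }
  assert (HQ : 4 * (ln 2 - ln b) / (- ln c * ln 2) <= x1) by lra.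
  assert (HQ2 : ln 2 - ln b <= (- ln c) * (x1 / 4 * ln 2)).
  { apply Rmult_le_compat_r with (r := - ln c * ln 2 / 4) in HQ; [|nra].
    replace (4 * (ln 2 - ln b) / (- ln c * ln 2) * (- ln c * ln 2 / 4)) with (ln 2 - ln b) in HQ
      by (field; split; lra).
    lra. }
  assert (Hfin : ln 2 + 2 * (Rpower 2 (x1 - e1) * ln c) <= ln b + Rpower 2 (x1 + 1 - e2) * ln c).
  { assert (ln 2 - ln b <= (- ln c) * (B - Rpower 2 (x1 + 1 - e2))) by nra.
    rewrite <- HP1 in H. nra. }
  rewrite <- (exp_ln 2) at 1 by lra. rewrite <- (exp_ln b) at 1 by lra.
  rewrite <- exp_plus. simpl. rewrite Rmult_1_r, <- exp_plus, <- exp_plus.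
  apply exp_le. lra.
Qed.


Lemma step_bound (c : R) (eps : nat -> R) (m : nat) (q : C * C) (s : R) :
  0 <= s -> norm2 q <= s -> norm2 (Fmap c eps m q) <= s * s + aseq c eps m * s.
Proof.
  intros Hs Hq. destruct q as [q1 q2]. unfold norm2, Fmap in *; simpl in *.
  pose proof (A_pos c eps m) as Ha.
  assert (H1 : Cmod q1 <= s) by (eapply Rle_trans; [apply Rmax_l | exact Hq]).
  assert (H2 : Cmod q2 <= s) by (eapply Rle_trans; [apply Rmax_r | exact Hq]).
  pose proof (Cmod_ge_0 q1). pose proof (Cmod_ge_0 q2).
  assert (HA : Cmod (RtoC (aseq c eps m)) = aseq c eps m) by (rewrite Cmod_R; apply Rabs_pos_eq; lra).
  apply Rmax_lub.
  - eapply Rle_trans; [apply Cmod_triangle|]. rewrite !Cmod_mult, HA.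
    apply Rplus_le_compat; [apply Rmult_le_compat; lra | apply Rmult_le_compat_l; lra].
  - rewrite Cmod_mult, HA. assert (0 <= s * s) by nra. nra.
Qed.

Lemma in_le_max (i : nat) (l : list nat) : In i l -> (i <= fold_right Nat.max O l)%nat.
Proof.
  induction l as [|x l IH]; simpl; [tauto|].
  intros [H|H]; [subst; lia | specialize (IH H); lia].
Qed.

Theorem lemma4p3 (b c : R) (eps : nat -> R) (K : C * C -> Prop) (delta : nat -> R) :
  0 < b < 1 -> 0 < c < 1 ->
  (forall n : nat, (1 <= n)%nat -> 0 < eps n < INR n) ->
  (forall n : nat, (1 <= n)%nat ->
     eps (S n) >= eps n + 1 / (Rpower 2 (INR n / 2) * ln 2)) ->
  is_lim_seq (fun n => eps n / INR n) 0 ->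
  compact2 K ->
  (forall p, K p -> Omega c eps p) ->
  (forall n, is_delta c eps K n (delta n)) ->
  (forall N : nat, exists n : nat, (N <= n)%nat /\
     exists k : nat, (1 <= k)%nat /\
       tseq eps (n + k + 1) <= Rpower 2 (INR k / INR (n + k + 1))) ->
  forall N : nat, exists n : nat, (N <= n)%nat /\
    forall k : nat, delta (n + k)%nat <= aseq c eps (n + k + 1) * b ^ k.
Proof.
  intros Hb Hc Heps Hstep Hlim HK HOm Hdelta Hk N.
  destruct (key b c eps Hb Hc Hstep Hlim) as [M HM].
  set (r := Rmin (c / 2) (1 - c)).
  assert (Hr0 : 0 < r) by (unfold r; apply Rmin_glb_lt; lra).
  assert (Hr1 : r <= c / 2) by apply Rmin_l.
  assert (Hr2 : r <= 1 - c) by apply Rmin_r.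
  assert (Hinv : forall m p, norm2 (orbit c eps m p) <= r -> norm2 (orbit c eps (S m) p) <= r).
  { intros m p H. simpl. eapply Rle_trans; [apply (step_bound _ _ _ _ r); [lra | exact H]|].
    assert (aseq c eps (S m) <= c) by (apply A_le_c; auto; [lia | apply Heps; lia]).
    nra. }
  assert (Hinv2 : forall m p j, norm2 (orbit c eps m p) <= r -> (m <= j)%nat -> norm2 (orbit c eps j p) <= r).
  { intros m p j H Hj. induction Hj; auto. }
  assert (HT : exists T, forall j p, K p -> (T <= j)%nat -> norm2 (orbit c eps j p) <= r).
  { destruct (HK nat (fun m q => norm2 (orbit c eps m q) < r)) as [l Hl].
    - intros i. apply open_U.
    - intros x Kx. specialize (HOm x Kx). unfold Omega in HOm.
      apply is_lim_seq_spec in HOm. destruct (HOm (mkposreal r Hr0)) as [N1 HN1].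
      exists N1. specialize (HN1 N1 (le_n _)). simpl in HN1.
      rewrite Rminus_0_r in HN1. eapply Rle_lt_trans; [apply Rle_abs | exact HN1].
    - exists (fold_right Nat.max O l). intros j p Kp Hj.
      destruct (Hl p Kp) as [i [Hi Hu]].
      apply Hinv2 with i; [lra | ]. pose proof (in_le_max i l Hi). lia. }
  destruct HT as [T HT].
  destruct (Hk (Nat.max N (Nat.max T (Nat.max M 1)))) as [n [Hn [k [Hk1 Htk]]]].
  assert (Hlow : exp (2 ^ k * ln c) <= aseq c eps (n + k + 1)).
  { apply A_lower; [auto | lia | ]. apply tseq_hyp; [lia | exact Htk]. }
  set (x := fun j : nat => (2 * r) ^ (2 ^ j)%nat / 2).
  assert (Hx0 : forall j, 0 <= x j).
  { intros j. unfold x. assert (0 <= (2*r) ^ (2^j)%nat) by (apply pow_le; lra). lra. }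
  assert (HxS : forall j, x (S j) = 2 * x j * x j).
  { intros j. unfold x. rewrite Nat.pow_succ_r', Nat.mul_comm, pow_mult. simpl. field. }
  assert (Hclaim : forall j, (j <= k)%nat ->
    (exists i, (i <= j)%nat /\ forall p, K p -> norm2 (orbit c eps (n + i) p) <= aseq c eps (n + i + 1))
    \/ (forall p, K p -> norm2 (orbit c eps (n + j) p) <= x j)).
  { induction j as [|j IH]; intros Hj.
    - right. intros p Kp. replace (x O) with r by (unfold x; simpl; field).
      apply HT; auto. lia.
    - destruct (IH ltac:(lia)) as [[i [Hi Hp]] | Hp].
      + left. exists i. split; [lia | exact Hp].
      + destruct (Rle_lt_dec (x j) (aseq c eps (n + j + 1))) as [Hle | Hlt].
        * left. exists j. split; [lia|]. intros p Kp. eapply Rle_trans; [apply Hp; auto | exact Hle].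
        * right. intros p Kp. rewrite Nat.add_succ_r. simpl.
          eapply Rle_trans; [apply (step_bound _ _ _ _ (x j)); [apply Hx0 | apply Hp; auto]|].
          rewrite HxS. replace (S (n + j)) with (n + j + 1)%nat by lia.
          pose proof (Hx0 j). nra. }
  assert (Hbase : exists i, (i <= k)%nat /\ forall p, K p -> norm2 (orbit c eps (n + i) p) <= aseq c eps (n + i + 1)).
  { destruct (Hclaim k (le_n _)) as [H|H]; auto.
    exists k. split; [lia|]. intros p Kp. eapply Rle_trans; [apply H; auto|].
    eapply Rle_trans; [|exact Hlow].
    unfold x. apply Rle_trans with ((2 * r) ^ (2 ^ k)%nat).
    { assert (0 <= (2*r) ^ (2^k)%nat) by (apply pow_le; lra). lra. }
    apply Rle_trans with (c ^ (2 ^ k)%nat).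
    { apply pow_incr. lra. }
    rewrite <- Rpower_pow by lra. unfold Rpower. apply exp_le.
    rewrite pow_INR. replace (INR 2) with 2 by (simpl; ring). lra. }
  destruct Hbase as [i [Hi Hbase]].
  exists (n + i)%nat. split; [lia|].
  assert (Hall : forall k' p, K p -> norm2 (orbit c eps (n + i + k') p) <= aseq c eps (n + i + k' + 1) * b ^ k').
  { induction k' as [|k' IH]; intros p Kp.
    - rewrite Nat.add_0_r. simpl. rewrite Rmult_1_r. apply Hbase; auto.
    - rewrite Nat.add_succ_r. simpl.
      assert (Hbk : 0 < b ^ k' <= 1).
      { split; [apply pow_lt; lra | rewrite <- (pow1 k'); apply pow_incr; lra]. }
      pose proof (A_pos c eps (n + i + k' + 1)) as Ha.
      eapply Rle_trans; [apply (step_bound _ _ _ _ (aseq c eps (n + i + k' + 1) * b ^ k')); [nra | apply IH; auto]|].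
      replace (S (n + i + k')) with (n + i + k' + 1)%nat by lia.
      specialize (HM (n + i + k')%nat ltac:(lia)).
      replace (S (n + i + k')) with (n + i + k' + 1)%nat in HM by lia.
      replace (S (n + i + k' + 1)) with (S (n + i + k') + 1)%nat in HM |- * by lia.
      set (a := aseq c eps (n + i + k' + 1)) in *.
      set (a2 := aseq c eps (S (n + i + k') + 1)) in *.
      set (bk := b ^ k') in *.
      assert (bk * bk <= bk) by nra.
      assert (a * bk * (a * bk) + a * (a * bk) <= 2 * a ^ 2 * bk) by (simpl; nra).
      assert (2 * a ^ 2 * bk <= b * a2 * bk) by nra.
      nra. }
  intros k'. destruct (Hdelta (n + i + k')%nat) as [[p [Kp Hd]] _].
  rewrite Hd. apply Hall; auto.
Qed.
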